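(* Let $S$ be a Stone space with $|S|\ge 3$ and $I$ a set of isolated points of $S$. Then $Q_6(I,S)=(S\cup\zeta(S);\tau,\le,\zeta)$ is a $pm$-space of height $1$.
   Context: A $pm$-space is $(P;\tau,\le,\zeta)$ where $(P;\tau,\le)$ is a Priestley space (compact, and whenever $y\not\le x$ there is a clopen decreasing set containing $x$ but not $y$), $[X)$ is clopen for every clopen decreasing $X\subseteq P$, and $\zeta$ is a continuous order-reversing involution. $Q_6(I,S)$ is $S\cup\zeta(S)$ where $\zeta(S)$ is a disjoint homeomorphic copy of $S$, $\tau$ is the disjoint union topology, $\zeta$ interchanges each $s\in S$ with its copy $\zeta(s)$, and $\le$ is the partial order whose only strict comparabilities are: for $x,y\in S$, $x<\zeta(y)$ iff ($x\ne y$ or $x\notin I$). *)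

(* Defs.v *)
From Stdlib Require Import List.
Set Implicit Arguments.

Definition topology (X : Type) := (X -> Prop) -> Prop.
Definition open {X} (t : topology X) (U : X -> Prop) : Prop := t U.

Definition is_topology {X} (t : topology X) : Prop :=
  open t (fun _ => True) /\
  (forall U V, open t U -> open t V -> open t (fun x => U x /\ V x)) /\
  (forall F : (X -> Prop) -> Prop,
      (forall U, F U -> open t U) -> open t (fun x => exists U, F U /\ U x)).

Definition closed {X} (t : topology X) (A : X -> Prop) : Prop :=
  open t (fun x => ~ A x).
Definition clopen {X} (t : topology X) (A : X -> Prop) : Prop :=
  open t A /\ closed t A.

Definition compact {X} (t : topology X) : Prop :=
  forall F : (X -> Prop) -> Prop,
    (forall U, F U -> open t U) ->
    (forall x, exists U, F U /\ U x) ->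
    exists l : list (X -> Prop),
      (forall U, In U l -> F U) /\ (forall x, exists U, In U l /\ U x).

Definition hausdorff {X} (t : topology X) : Prop :=
  forall x y, x <> y -> exists U V, open t U /\ open t V /\ U x /\ V y /\
    (forall z, ~ (U z /\ V z)).

Definition connected_set {X} (t : topology X) (A : X -> Prop) : Prop :=
  ~ exists U V, open t U /\ open t V /\
      (forall x, A x -> U x \/ V x) /\
      (exists x, A x /\ U x) /\ (exists x, A x /\ V x) /\
      (forall x, ~ (A x /\ U x /\ V x)).

Definition totally_disconnected {X} (t : topology X) : Prop :=
  forall A, connected_set t A -> forall x y, A x -> A y -> x = y.

Definition stone_space {X} (t : topology X) : Prop :=
  is_topology t /\ compact t /\ hausdorff t /\ totally_disconnected t.

Definition isolated {X} (t : topology X) (s : X) : Prop :=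
  open t (fun x => x = s).

Definition continuous {X Y} (tX : topology X) (tY : topology Y) (f : X -> Y) : Prop :=
  forall V, open tY V -> open tX (fun x => V (f x)).

Definition partial_order {X} (le : X -> X -> Prop) : Prop :=
  (forall x, le x x) /\ (forall x y, le x y -> le y x -> x = y) /\
  (forall x y z, le x y -> le y z -> le x z).

Definition decreasing {X} (le : X -> X -> Prop) (A : X -> Prop) : Prop :=
  forall x y, A x -> le y x -> A y.

Definition upset {X} (le : X -> X -> Prop) (A : X -> Prop) : X -> Prop :=
  fun y => exists x, A x /\ le x y.

Definition priestley_space {X} (t : topology X) (le : X -> X -> Prop) : Prop :=
  partial_order le /\ compact t /\
  (forall x y, ~ le y x ->
     exists A, clopen t A /\ decreasing le A /\ A x /\ ~ A y).

Definition pm_space {X} (t : topology X) (le : X -> X -> Prop) (zeta : X -> X) : Prop :=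
  is_topology t /\ priestley_space t le /\
  (forall A, clopen t A -> decreasing le A -> clopen t (upset le A)) /\
  continuous t t zeta /\
  (forall x y, le x y -> le (zeta y) (zeta x)) /\
  (forall x, zeta (zeta x) = x).

Definition lt_of {X} (le : X -> X -> Prop) (x y : X) : Prop := le x y /\ x <> y.
Definition has_chain {X} (le : X -> X -> Prop) (n : nat) : Prop :=
  exists f : nat -> X, forall i, i < n -> lt_of le (f i) (f (S i)).
Definition height_is {X} (le : X -> X -> Prop) (n : nat) : Prop :=
  has_chain le n /\ ~ has_chain le (S n).

(* carrier S ∪ ζ(S) := S + S, with inl s = s and inr s = ζ(s) *)
Definition Q6_top {S} (t : topology S) : topology (S + S) :=
  fun U => open t (fun s => U (inl s)) /\ open t (fun s => U (inr s)).

Definition Q6_zeta {S} (x : S + S) : S + S :=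
  match x with inl s => inr s | inr s => inl s end.

(* only strict comparabilities: x < ζ(y) iff (x <> y or x ∉ I), for x, y ∈ S *)
Definition Q6_le {S} (I : S -> Prop) (x y : S + S) : Prop :=
  x = y \/
  match x, y with
  | inl a, inr b => a <> b \/ ~ I a
  | _, _ => False
  end.

(* Main.v *)
Require Import Defs.
From Stdlib Require Import List Classical FunctionalExtensionality PropExtensionality Lia.

Lemma open_ext {X} {t : topology X} {U V : X -> Prop} :
  (forall x, U x <-> V x) -> open t U -> open t V.
Proof.
  intros H HU. assert (E : U = V).
  { extensionality x. apply propositional_extensionality. apply H. }
  subst; exact HU.
Qed.

Lemma open_or {X} (t : topology X) (U V : X -> Prop) : is_topology t ->
  open t U -> open t V -> open t (fun x => U x \/ V x).
Proof.
  intros [_ [_ Hu]] HU HV.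
  apply (open_ext (U := fun x => exists W, (W = U \/ W = V) /\ W x)).
  - intro x; split.
    + intros [W [[-> | ->] Hw]]; auto.
    + intros [h|h]; eauto.
  - apply Hu. intros W [-> | ->]; auto.
Qed.

Lemma open_and {X} (t : topology X) (U V : X -> Prop) : is_topology t ->
  open t U -> open t V -> open t (fun x => U x /\ V x).
Proof. intros [_ [Ha _]] HU HV. apply Ha; auto. Qed.

Lemma open_full {X} (t : topology X) : is_topology t -> open t (fun _ => True).
Proof. intros [H _]; exact H. Qed.

Lemma open_empty {X} (t : topology X) : is_topology t -> open t (fun _ => False).
Proof.
  intros [_ [_ Hu]].
  apply (open_ext (U := fun x => exists W, (fun _ : X -> Prop => False) W /\ W x)).
  - intro x; split; [intros [W [[] _]] | intros []].
  - apply Hu. intros _ [].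
Qed.

Lemma closed_cover {X} (t : topology X) (K : X -> Prop) (F : (X -> Prop) -> Prop) :
  compact t -> closed t K -> (forall U, F U -> open t U) ->
  (forall x, K x -> exists U, F U /\ U x) ->
  exists l, (forall U, In U l -> F U) /\ (forall x, K x -> exists U, In U l /\ U x).
Proof.
  intros Hc HK HF Hcov.
  destruct (Hc (fun U => F U \/ U = (fun x => ~ K x))) as [l [Hl1 Hl2]].
  - intros U [h| ->]; auto.
  - intro x. destruct (classic (K x)) as [k|k].
    + destruct (Hcov x k) as [U [? ?]]; eauto.
    + exists (fun x => ~ K x); auto.
  - assert (G : forall l, (forall U, In U l -> F U \/ U = (fun x => ~ K x)) ->
      exists l', (forall U, In U l' -> F U) /\
        forall x, K x -> (exists U, In U l /\ U x) -> exists U, In U l' /\ U x).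
    { clear. induction l as [|U0 l IH]; intros H.
      - exists nil; split; [intros U []|]. intros x _ [U [[] _]].
      - destruct IH as [l' [H1 H2]]. { intros U i; apply H; simpl; auto. }
        destruct (H U0 (or_introl eq_refl)) as [f|e].
        + exists (U0 :: l'); split.
          * intros U [<-|i]; auto.
          * intros x kx [U [[<-|i] ux]].
            -- exists U0; simpl; auto.
            -- destruct (H2 x kx (ex_intro _ U (conj i ux))) as [V [iv vx]].
               exists V; simpl; auto.
        + exists l'; split; auto.
          intros x kx [U [[<-|i] ux]].
          * subst U0. contradiction.
          * eauto. }
    destruct (G l Hl1) as [l' [H1 H2]].
    exists l'; split; auto.
Qed.

Lemma sep_gen {X} (t : topology X) (K L : X -> Prop) : is_topology t -> compact t -> closed t K ->
  (forall y, K y -> exists W W', open t W /\ open t W' /\ W y /\ (forall z, L z -> W' z) /\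
      (forall z, ~ (W z /\ W' z))) ->
  exists W W', open t W /\ open t W' /\ (forall z, K z -> W z) /\ (forall z, L z -> W' z) /\
      (forall z, ~ (W z /\ W' z)).
Proof.
  intros Ht Hc HK H.
  pose (F := fun W => open t W /\ exists W', open t W' /\ (forall z, L z -> W' z) /\
                                        (forall z, ~ (W z /\ W' z))).
  destruct (closed_cover t K F Hc HK) as [l [Hl1 Hl2]].
  - intros U [h _]; exact h.
  - intros x kx. destruct (H x kx) as [W [W' [o1 [o2 [wx [lw d]]]]]].
    exists W; split; [split; [exact o1| exists W'; auto] | exact wx].
  - assert (Hw : exists W', open t W' /\ (forall z, L z -> W' z) /\
                 forall V, In V l -> forall z, ~ (V z /\ W' z)).
    { clear Hl2. induction l as [|V0 l IH].
      - exists (fun _ => True). split; [apply open_full; auto|]. split; [auto| intros V []].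
      - destruct IH as [W1 [o1 [l1 d1]]]. { intros; apply Hl1; simpl; auto. }
        destruct (Hl1 V0 (or_introl eq_refl)) as [_ [W2 [o2 [l2 d2]]]].
        exists (fun z => W1 z /\ W2 z). split; [apply open_and; auto|]. split; [auto|].
        intros V [<-|i] z [vz [w1 w2]].
        + apply (d2 z); auto.
        + apply (d1 V i z); auto. }
    destruct Hw as [W' [o' [l' d']]].
    exists (fun z => exists V, In V l /\ V z), W'.
    split; [apply Ht; intros U i; apply (Hl1 U i)|].
    split; auto. split; [exact Hl2|]. split; auto.
    intros z [[V [i vz]] wz]. exact (d' V i z (conj vz wz)).
Qed.

Lemma points_closed {X} (t : topology X) (a : X) : is_topology t -> hausdorff t ->
  open t (fun z => z <> a).
Proof.
  intros Ht Hh.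
  apply (open_ext (U := fun z => exists W, (open t W /\ ~ W a) /\ W z)).
  - intro z; split.
    + intros [W [[_ nw] wz]] e; subst; auto.
    + intro za. destruct (Hh z a za) as [U [V [oU [oV [Uz [Va d]]]]]].
      exists U; split; auto. split; auto. intro Ua; apply (d a); auto.
  - apply Ht. intros U [h _]; exact h.
Qed.

Lemma stone_sep {X} (t : topology X) : stone_space t ->
  forall a b, a <> b -> exists C, clopen t C /\ C a /\ ~ C b.
Proof.
  intros [Ht [Hc [Hh Htd]]] a b ab.
  apply NNPP; intro Hn.
  set (Q := fun x => forall C, clopen t C -> C a -> C x).
  assert (Qb : Q b). { intros C HC Ca. apply NNPP; intro; apply Hn; eauto. }
  assert (Qa : Q a) by (intros C _ Ca; auto).
  assert (nQ : forall x, ~ Q x -> exists C, clopen t C /\ C a /\ ~ C x).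
  { intros x nq. unfold Q in nq. apply not_all_ex_not in nq as [C nq].
    apply imply_to_and in nq as [HC nq]; apply imply_to_and in nq as [Ca nCx]. eauto. }
  assert (nQopen : open t (fun x => ~ Q x)).
  { apply (open_ext (U := fun x => exists W, (exists C, clopen t C /\ C a /\ W = fun z => ~ C z) /\ W x)).
    - intros x; split.
      + intros [W [[C [HC [Ca ->]]] wx]] q. apply wx, q; auto.
      + intro nq. destruct (nQ x nq) as [C [HC [Ca nCx]]].
        exists (fun z => ~ C z); split; eauto.
    - apply Ht. intros W [C [[_ HC] [_ ->]]]. exact HC. }
  assert (key : forall U V, open t U -> open t V -> (forall x, Q x -> U x \/ V x) ->
            (forall x, ~ (Q x /\ U x /\ V x)) -> U a -> forall q, Q q -> V q -> False).
  { intros U V oU oV cov dis Ua q Qq Vq.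
    set (K1 := fun x => Q x /\ ~ V x). set (K2 := fun x => Q x /\ ~ U x).
    assert (cK1 : closed t K1).
    { unfold closed. apply (open_ext (U := fun x => ~ Q x \/ V x)).
      - intro x; unfold K1; split; [intros [h|h] [h1 h2]; auto | intro h].
        destruct (classic (Q x)); auto. right; apply NNPP; auto.
      - apply open_or; auto. }
    assert (cK2 : closed t K2).
    { unfold closed. apply (open_ext (U := fun x => ~ Q x \/ U x)).
      - intro x; unfold K2; split; [intros [h|h] [h1 h2]; auto | intro h].
        destruct (classic (Q x)); auto. right; apply NNPP; auto.
      - apply open_or; auto. }
    destruct (sep_gen t K1 K2 Ht Hc cK1) as [U' [V' [oU' [oV' [sU [sV dUV]]]]]].
    { intros y [Qy nVy].
      destruct (sep_gen t K2 (fun z => z = y) Ht Hc cK2) as [W [W' [oW [oW' [sW [sW' dW]]]]]].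
      - intros z [Qz nUz]. assert (zy : z <> y).
        { intro e; subst. destruct (cov y Qy); auto. }
        destruct (Hh z y zy) as [A [B [oA [oB [Az [By dAB]]]]]].
        exists A, B. repeat split; auto. intros w e; subst; auto.
      - exists W', W. repeat split; auto. intros z [h1 h2]; apply (dW z); auto. }
    set (K3 := fun x => ~ (U' x \/ V' x)).
    assert (cK3 : closed t K3).
    { unfold closed. apply (open_ext (U := fun x => U' x \/ V' x)).
      - intro x; unfold K3; split; [intros h h'; auto | apply NNPP].
      - apply open_or; auto. }
    assert (QUV : forall x, Q x -> U' x \/ V' x).
    { intros x Qx. destruct (classic (V x)) as [v|v].
      - destruct (classic (U x)) as [u|u].
        + exfalso; apply (dis x); auto.
        + right; apply sV; split; auto.
      - left; apply sU; split; auto. }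
    destruct (closed_cover t K3 (fun W => exists C, clopen t C /\ C a /\ W = fun z => ~ C z) Hc cK3)
      as [l [Hl1 Hl2]].
    - intros W [C [[_ HC] [_ ->]]]. exact HC.
    - intros x k3. assert (nq : ~ Q x) by (intro qx; apply k3; auto).
      destruct (nQ x nq) as [C [HC [Ca nCx]]]. exists (fun z => ~ C z); split; eauto.
    - assert (HC0 : exists C0, clopen t C0 /\ C0 a /\ forall z, C0 z -> forall W, In W l -> ~ W z).
      { clear Hl2. induction l as [|W0 l IH].
        - exists (fun _ => True). split; [split; [apply open_full; auto|]|split; [auto|]].
          + unfold closed. apply (open_ext (U := fun _ => False)); [intro; tauto| apply open_empty; auto].
          + intros z _ W [].
        - destruct IH as [C1 [[o1 c1] [a1 d1]]]. { intros; apply Hl1; simpl; auto. }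
          destruct (Hl1 W0 (or_introl eq_refl)) as [C2 [[o2 c2] [a2 ->]]].
          exists (fun z => C1 z /\ C2 z). split; [split|split; auto].
          + apply open_and; auto.
          + unfold closed. apply (open_ext (U := fun z => ~ C1 z \/ ~ C2 z)).
            * intro z; tauto.
            * apply open_or; auto.
          + intros z [z1 z2] W [<-|i].
            * simpl; auto.
            * apply (d1 z z1 W i). }
      destruct HC0 as [C0 [[o0 c0] [a0 d0]]].
      assert (Qq' : (fun z => C0 z /\ U' z) q).
      { apply Qq.
        - split; [apply open_and; auto|].
          unfold closed. apply (open_ext (U := fun z => ~ C0 z \/ V' z)).
          + intro z; split.
            * intros [h|h] [h1 h2]; auto. apply (dUV z); auto.
            * intro h. destruct (classic (C0 z)) as [c|c]; auto. right.
              apply NNPP; intro nv. assert (k : K3 z).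
              { intros [u|v]; auto. }
              destruct (Hl2 z k) as [W [i wz]]. apply (d0 z c W i wz).
          + apply open_or; auto.
        - split; auto. apply sU. split; auto. intro Va; apply (dis a); auto. }
      destruct Qq' as [_ Uq]. apply (dUV q); split; auto. apply sV. split; auto.
      intro Uq0; apply (dis q); auto. }
  apply ab. apply (Htd Q); auto.
  intros [U [V [oU [oV [cov [[p [Qp Up]] [[q [Qq Vq]] dis]]]]]]].
  destruct (cov a Qa) as [Ua|Va].
  - exact (key U V oU oV cov dis Ua q Qq Vq).
  - apply (key V U oV oU) with (q := p); auto.
    + intros x Qx; destruct (cov x Qx); auto.
    + intros x [? [? ?]]; apply (dis x); auto.
Qed.

Lemma q6_is_top {S} (t : topology S) : is_topology t -> is_topology (Q6_top t).
Proof.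
  intros Ht. unfold Q6_top, open. split; [|split].
  - split; apply (open_full t Ht).
  - intros U V [u1 u2] [v1 v2]; split; apply (open_and t); auto.
  - intros F HF. split.
    + apply (open_ext (U := fun s => exists W, (exists U, F U /\ W = fun s => U (inl s)) /\ W s)).
      * intro s; split; [intros [W [[U [fu ->]] ws]]; eauto| intros [U [fu us]]].
        exists (fun s => U (inl s)); eauto.
      * apply Ht. intros W [U [fu ->]]. apply (HF U fu).
    + apply (open_ext (U := fun s => exists W, (exists U, F U /\ W = fun s => U (inr s)) /\ W s)).
      * intro s; split; [intros [W [[U [fu ->]] ws]]; eauto| intros [U [fu us]]].
        exists (fun s => U (inr s)); eauto.
      * apply Ht. intros W [U [fu ->]]. apply (HF U fu).
Qed.

Lemma pull_cover {S Y} (t : topology S) (m : S -> Y) (F : (Y -> Prop) -> Prop) : compact t ->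
  (forall U, F U -> open t (fun s => U (m s))) -> (forall s, exists U, F U /\ U (m s)) ->
  exists l, (forall U, In U l -> F U) /\ forall s, exists U, In U l /\ U (m s).
Proof.
  intros Hc HF Hcov.
  destruct (Hc (fun W => exists U, F U /\ W = fun s => U (m s))) as [l1 [H1 H2]].
  - intros W [U [fu ->]]; auto.
  - intro s. destruct (Hcov s) as [U [fu us]]. exists (fun s => U (m s)); eauto.
  - assert (G : forall l1, (forall W, In W l1 -> exists U, F U /\ W = fun s => U (m s)) ->
       exists l, (forall U, In U l -> F U) /\ forall s W, In W l1 -> W s -> exists U, In U l /\ U (m s)).
    { clear. induction l1 as [|W0 l1 IH]; intros H.
      - exists nil; split; [intros U []| intros s W []].
      - destruct IH as [l [Hl1 Hl2]]. { intros; apply H; simpl; auto. }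
        destruct (H W0 (or_introl eq_refl)) as [U0 [f0 e0]].
        exists (U0 :: l); split.
        + intros U [<-|i]; auto.
        + intros s W [<-|i] ws.
          * subst. exists U0; simpl; auto.
          * destruct (Hl2 s W i ws) as [U [iu us]]. exists U; simpl; auto. }
    destruct (G l1 H1) as [l [Hl1 Hl2]].
    exists l; split; auto. intro s. destruct (H2 s) as [W [i ws]]. eauto.
Qed.

Lemma q6_compact {S} (t : topology S) : compact t -> compact (Q6_top t).
Proof.
  intros Hc F HF Hcov.
  destruct (pull_cover t inl F Hc) as [l1 [A1 B1]].
  { intros U fu; apply (HF U fu). } { intro s; apply (Hcov (inl s)). }
  destruct (pull_cover t inr F Hc) as [l2 [A2 B2]].
  { intros U fu; apply (HF U fu). } { intro s; apply (Hcov (inr s)). }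
  exists (l1 ++ l2); split.
  - intros U i; apply in_app_or in i as [i|i]; auto.
  - intros [s|s].
    + destruct (B1 s) as [U [i us]]. exists U; split; auto; apply in_or_app; auto.
    + destruct (B2 s) as [U [i us]]. exists U; split; auto; apply in_or_app; auto.
Qed.

Definition clo {S} (t : topology S) (C : S -> Prop) := open t C /\ open t (fun s => ~ C s).

Lemma clo_ext {S} (t : topology S) (C D : S -> Prop) : (forall x, C x <-> D x) -> clo t C -> clo t D.
Proof.
  intros H [h1 h2]; split.
  - apply (open_ext (U := C)); auto.
  - apply (open_ext (U := fun s => ~ C s)); auto. intro x; rewrite H; tauto.
Qed.

Lemma clo_full {S} (t : topology S) : is_topology t -> clo t (fun _ => True).
Proof.
  intro Ht; split; [apply open_full; auto|].
  apply (open_ext (U := fun _ => False)); [intro; tauto| apply open_empty; auto].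
Qed.

Lemma clo_empty {S} (t : topology S) : is_topology t -> clo t (fun _ => False).
Proof.
  intro Ht; split; [apply open_empty; auto|].
  apply (open_ext (U := fun _ => True)); [intro; tauto| apply open_full; auto].
Qed.

Lemma clo_or {S} (t : topology S) C D : is_topology t -> clo t C -> clo t D -> clo t (fun s => C s \/ D s).
Proof.
  intros Ht [c1 c2] [d1 d2]; split; [apply open_or; auto|].
  apply (open_ext (U := fun s => ~ C s /\ ~ D s)); [intro; tauto| apply open_and; auto].
Qed.

Lemma clo_pt {S} (t : topology S) a : is_topology t -> hausdorff t -> isolated t a -> clo t (fun s => s <> a).
Proof.
  intros Ht Hh Hi; split; [apply points_closed; auto|].
  apply (open_ext (U := fun s => s = a)); [intro; split; [auto| apply NNPP]| exact Hi].
Qed.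

Lemma q6_clopen {S} (t : topology S) (A : S + S -> Prop) :
  clo t (fun s => A (inl s)) -> clo t (fun s => A (inr s)) -> clopen (Q6_top t) A.
Proof. intros [a1 a2] [b1 b2]; split; split; auto. Qed.

Theorem theorem4p7 (S : Type) (tS : topology S) (I : S -> Prop) :
  stone_space tS ->
  (exists a b c : S, a <> b /\ a <> c /\ b <> c) ->
  (forall s, I s -> isolated tS s) ->
  pm_space (Q6_top tS) (Q6_le I) Q6_zeta /\ height_is (Q6_le I) 1.
Proof.
  intros Hst [a0 [b0 [c0 [ab0 _]]]] HI.
  pose proof Hst as [Ht [Hc [Hh Htd]]].
  assert (sep : forall a b, a <> b -> exists C, clo tS C /\ C a /\ ~ C b).
  { intros a b ab. destruct (stone_sep tS Hst a b ab) as [C [[o c] [ca cb]]].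
    exists C; split; [split|]; auto. }
  split; [split; [|split; [|split; [|split; [|split]]]] |].
  - apply q6_is_top; auto.
  - split; [|split].
    + split; [|split].
      * intro x; left; reflexivity.
      * intros [x|x] [y|y]; unfold Q6_le; intros [e|h] [e'|h']; auto; try contradiction;
          congruence.
      * intros [x|x] [y|y] [z|z]; unfold Q6_le; intros [e|h] [e'|h']; auto;
          try contradiction; try (inversion e; subst; auto); try (inversion e'; subst; auto).
    + apply q6_compact; auto.
    + intros [x|x] [y|y]; unfold Q6_le; intro nle.
      * assert (yx : y <> x) by (intro e; apply nle; left; congruence).
        destruct (sep x y (not_eq_sym yx)) as [C [HC [Cx nCy]]].
        exists (fun z => match z with inl s => C s | inr _ => False end).
        split; [apply q6_clopen; [exact HC| apply clo_empty; auto]|].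
        split; [|split; auto].
        intros [u|u] [v|v] Au [e|h]; try contradiction; try congruence; simpl in *.
      * exists (fun z => match z with inl _ => True | inr _ => False end).
        split; [apply q6_clopen; [apply clo_full| apply clo_empty]; auto|].
        split; [|split; auto].
        intros [u|u] [v|v] Au [e|h]; try contradiction; try congruence; simpl in *; auto.
      * assert (e : y = x /\ I y).
        { split; apply NNPP; intro h; apply nle; right; auto. }
        destruct e as [<- Iy].
        exists (fun z => match z with inl s => s <> y | inr s => s = y end).
        split; [apply q6_clopen|].
        { apply clo_pt; auto. }
        { apply (clo_ext tS (fun s => ~ s <> y)); [intro; split; [apply NNPP| auto]|].
          destruct (clo_pt tS y Ht Hh (HI y Iy)) as [p1 p2]. split; auto.
          apply (open_ext (U := fun s => s <> y)); [intro; tauto| auto]. }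
        split; [|split; auto; congruence].
        intros [u|u] [v|v] Au [e|h]; try contradiction; try congruence; simpl in *.
        subst. destruct h as [h|h]; auto. intro e; subst; contradiction.
      * assert (yx : y <> x) by (intro e; apply nle; left; congruence).
        destruct (sep x y (not_eq_sym yx)) as [C [HC [Cx nCy]]].
        exists (fun z => match z with inl _ => True | inr s => C s end).
        split; [apply q6_clopen; [apply clo_full; auto| exact HC]|].
        split; [|split; auto].
        intros [u|u] [v|v] Au [e|h]; try contradiction; try congruence; simpl in *; auto.
  - intros A [oA cA] dA.
    pose (B := fun s => exists a, A (inl a) /\ (a <> s \/ ~ I a)).
    assert (cB : clo tS B).
    { destruct (classic (exists a, A (inl a) /\ ~ I a)) as [[a [Aa nIa]]|h1].
      { apply (clo_ext tS (fun _ => True)); [|apply clo_full; auto].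
        intro s; split; [intros _; exists a; auto| auto]. }
      destruct (classic (exists a b, A (inl a) /\ A (inl b) /\ a <> b)) as [[a [b [Aa [Ab nab]]]]|h2].
      { apply (clo_ext tS (fun _ => True)); [|apply clo_full; auto].
        intro s; split; [intros _| auto].
        destruct (classic (a = s)); [subst; exists b; auto| exists a; auto]. }
      destruct (classic (exists a, A (inl a))) as [[a Aa]|h3].
      - assert (Ia : I a) by (apply NNPP; intro; apply h1; eauto).
        apply (clo_ext tS (fun s => s <> a)); [|apply clo_pt; auto].
        intro s; split.
        + intro sa; exists a; split; auto.
        + intros [a' [Aa' [h|h]]].
          * assert (a' = a) by (apply NNPP; intro; apply h2; eauto). subst; auto.
          * exfalso; apply h1; eauto.
      - apply (clo_ext tS (fun _ => False)); [|apply clo_empty; auto].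
        intro s; split; [intros []| intros [a [Aa _]]; apply h3; eauto]. }
    assert (cAr : clo tS (fun s => A (inr s))) by (split; [apply oA| apply cA]).
    assert (cAl : clo tS (fun s => A (inl s))) by (split; [apply oA| apply cA]).
    apply q6_clopen.
    + apply (clo_ext tS (fun s => A (inl s))); auto.
      intro s; split; [intro h; exists (inl s); split; [auto| left; auto]|].
      intros [[x|x] [Ax [e|h]]]; try contradiction; congruence.
    + apply (clo_ext tS (fun s => A (inr s) \/ B s)); [|apply clo_or; auto].
      intro s; split.
      * intros [h|[a [Aa h]]]; [exists (inr s); split; [auto| left; auto]|].
        exists (inl a); split; auto. right; auto.
      * intros [[x|x] [Ax [e|h]]]; try contradiction.
        -- discriminate.
        -- right; exists x; auto.
        -- inversion e; subst; auto.
  - intros V [v1 v2]; split; [exact v2| exact v1].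
  - intros [x|x] [y|y]; unfold Q6_le; intros [e|h]; simpl; auto; try contradiction;
      try (inversion e; subst; auto).
    right. destruct h as [h|h]; [left; auto|].
    destruct (classic (x = y)); [subst; right; auto| left; auto].
  - intros [x|x]; reflexivity.
  - split.
    + exists (fun i => match i with 0 => inl a0 | _ => inr b0 end).
      intros i hi. assert (i = 0) by lia. subst. split; [right; left; auto| discriminate].
    + intros [f H].
      pose proof (H 0 ltac:(lia)) as H0. pose proof (H 1 ltac:(lia)) as H1.
      unfold lt_of, Q6_le in *. simpl in *.
      destruct (f 0), (f 1), (f 2); intuition congruence.
Qed.
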